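(* Let $G$ be a non-trivial Polish group such that for every infinite $S\subseteq\mathbb N$ the set $\mathbb A(S)=\{g\in G: \exists s\in S\ g^s=1\}$ is dense in $G$. Then every topological similarity class of $G$ is meagre. Moreover, for every infinite $S\subseteq\mathbb N$ the set $$\mathbb C(S)=\{g\in G:\ \text{there is a sequence } (s_n)\subseteq S \text{ with } g^{s_n}\to 1\}$$ is a dense $G_\delta$ subset of $G$ that is invariant under topological similarity.
   Context: Two elements $f,g$ of a Polish group $G$ are topologically similar if the cyclic subgroups $\langle f\rangle$ and $\langle g\rangle$, with the subspace topologies from $G$, are isomorphic as topological groups. A topological similarity class is an equivalence class of this relation. *)

(* Defs.v *)
From HB Require Import structures.
From mathcomp Require Import all_boot all_order all_algebra.
From mathcomp Require Import all_classical all_reals all_analysis borel_hierarchy.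
From mathcomp Require Import Rstruct Rstruct_topology.

Set Implicit Arguments.
Unset Strict Implicit.
Unset Printing Implicit Defensive.

Import Order.TTheory GRing.Theory Num.Theory.
Import numFieldNormedType.Exports.
Local Open Scope classical_set_scope.
Local Open Scope ring_scope.

Notation Real := Rdefinitions.R.

Definition is_metric (T : Type) (d : T -> T -> Real) :=
  [/\ forall x y, 0 <= d x y,
      forall x y, d x y = 0 <-> x = y,
      forall x y, d x y = d y x &
      forall x y z, d x z <= d x y + d y z].

Definition metric_compatible (T : topologicalType) (d : T -> T -> Real) :=
  forall A : set T, open A <->
    (forall x, A x -> exists2 e : Real, 0 < e & [set y | d x y < e] `<=` A).

Definition metric_complete (T : topologicalType) (d : T -> T -> Real) :=
  forall u : nat -> T,
    (forall e : Real, 0 < e -> exists N, forall m n, (N <= m)%N -> (N <= n)%N ->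
        d (u m) (u n) < e) ->
    exists l : T, u @ \oo --> l.

Definition separable_space (T : topologicalType) :=
  exists D : set T, countable D /\ dense D.

Definition polish_space (T : topologicalType) :=
  separable_space T /\
  exists d : T -> T -> Real,
    [/\ is_metric d, metric_compatible d & metric_complete d].

Definition is_topological_group (T : topologicalType)
    (mul : T -> T -> T) (inv : T -> T) (one : T) :=
  [/\ forall x y z, mul x (mul y z) = mul (mul x y) z,
      forall x, mul one x = x /\ mul x one = x,
      forall x, mul (inv x) x = one /\ mul x (inv x) = one,
      continuous (fun p : T * T => mul p.1 p.2) &
      continuous inv].

Definition is_polish_group (T : topologicalType)
    (mul : T -> T -> T) (inv : T -> T) (one : T) :=
  polish_space T /\ is_topological_group mul inv one.

Definition gpow (T : Type) (mul : T -> T -> T) (one : T) (g : T) (n : nat) : T :=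
  iter n (mul g) one.

Definition gzpow (T : Type) (mul : T -> T -> T) (inv : T -> T) (one : T)
    (g : T) (z : int) : T :=
  match z with
  | Posz n => gpow mul one g n
  | Negz n => inv (gpow mul one g n.+1)
  end.

Definition cyclic_subgroup (T : Type) (mul : T -> T -> T) (inv : T -> T) (one : T)
    (g : T) : set T :=
  range (gzpow mul inv one g).

(* f and g are topologically similar: <f> and <g>, with the subspace
   topologies, are isomorphic as topological groups, i.e. there are mutually
   inverse maps between <f> and <g>, the first a group homomorphism, both
   continuous for the subspace topologies. *)
Definition top_similar (T : topologicalType)
    (mul : T -> T -> T) (inv : T -> T) (one : T) (f g : T) :=
  let Cf := cyclic_subgroup mul inv one f in
  let Cg := cyclic_subgroup mul inv one g in
  exists phi psi : T -> T,
    [/\ forall x, Cf x -> Cg (phi x),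
        forall y, Cg y -> Cf (psi y),
        forall x, Cf x -> psi (phi x) = x &
        forall y, Cg y -> phi (psi y) = y] /\
    [/\ forall x y, Cf x -> Cf y -> phi (mul x y) = mul (phi x) (phi y),
        {within Cf, continuous phi} &
        {within Cg, continuous psi}].

Definition nowhere_dense (T : topologicalType) (A : set T) :=
  interior (closure A) = set0.

Definition meagre (T : topologicalType) (A : set T) :=
  exists F : (set T)^nat, (forall i, nowhere_dense (F i)) /\ A `<=` \bigcup_i F i.

Definition setA_S (T : Type) (mul : T -> T -> T) (one : T) (S : set nat) : set T :=
  [set g | exists2 s, S s & gpow mul one g s = one].

Definition setC_S (T : topologicalType) (mul : T -> T -> T) (one : T)
    (S : set nat) : set T :=
  [set g | exists s : nat -> nat, (forall n, S (s n)) /\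
             (fun n => gpow mul one g (s n)) @ \oo --> one].

(* Main.v *)
Require Import Defs.
From HB Require Import structures.
From mathcomp Require Import all_boot all_order all_algebra.
From mathcomp Require Import all_classical all_reals all_analysis borel_hierarchy.
From mathcomp Require Import finmap lra Rstruct Rstruct_topology.
Import Order.TTheory GRing.Theory Num.Theory.
Local Open Scope classical_set_scope.

Lemma unbounded_infinite (A : set nat) :
  (forall N, exists n, (N <= n)%N /\ A n) -> infinite_set A.
Proof.
move=> H fA.
pose N := (\max_(x <- fset_set A) x).+1.
have [n [Nn An]] := H N.
have : (n <= \max_(x <- fset_set A) x)%N.
  apply: (@leq_bigmax_seq _ _ _ (fun x => x) n) => //.
  by rewrite in_fset_set // mem_set.
by rewrite leqNgt Nn.
Qed.

Section Alg.
Context (T : Type) (mul : T -> T -> T) (inv : T -> T) (one : T).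
Hypothesis assoc : forall x y z, mul x (mul y z) = mul (mul x y) z.
Hypothesis unit : forall x, mul one x = x /\ mul x one = x.
Hypothesis invl : forall x, mul (inv x) x = one /\ mul x (inv x) = one.
Local Notation gp := (gpow mul one).
Local Notation gz := (gzpow mul inv one).

Lemma gpowS g n : gp g n.+1 = mul g (gp g n). Proof. by []. Qed.

Lemma gpowD g m n : gp g (m + n) = mul (gp g m) (gp g n).
Proof.
elim: m => [|m IH]; first by rewrite add0n /= (unit _).1.
by rewrite addSn !gpowS IH assoc.
Qed.

Lemma gpowSr g n : gp g n.+1 = mul (gp g n) g.
Proof. by rewrite -addn1 gpowD /= (unit _).2. Qed.

Lemma gpowM g m n : gp g (m * n) = gp (gp g m) n.
Proof.
elim: n => [|n IH]; first by rewrite muln0.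
by rewrite mulnS gpowD IH.
Qed.

Lemma gpow1 n : gp one n = one.
Proof. by elim: n => //= n ->; rewrite (unit _).1. Qed.

Lemma mul_cancel x y z : mul x y = mul x z -> y = z.
Proof.
move=> H; rewrite -[y](unit _).1 -[z](unit _).1 -(invl x).1 -!assoc.
by rewrite H.
Qed.

Lemma inv_uniq a b : mul a b = one -> b = inv a.
Proof. by move=> H; apply: (@mul_cancel a); rewrite H (invl _).2. Qed.

Lemma inv_mul x y : inv (mul x y) = mul (inv y) (inv x).
Proof.
symmetry; apply: inv_uniq.
rewrite -assoc [mul y _]assoc (invl y).2 (unit _).1 (invl x).2 //.
Qed.

Lemma inv1 : inv one = one.
Proof. by symmetry; apply: inv_uniq; rewrite (unit _).1. Qed.

Lemma gpow_inv g n : gp (inv g) n = inv (gp g n).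
Proof.
elim: n => [|n IH]; first by rewrite /= inv1.
by rewrite gpowS IH gpowSr inv_mul.
Qed.

Lemma gzpowN g m : gz g (- (m%:Z))%R = inv (gp g m).
Proof.
case: m => [|m]; first by rewrite /= inv1.
by rewrite -NegzE.
Qed.

Lemma gzpow_nat g w k : gp (gz g w) k = gz g (w * k%:Z)%R.
Proof.
case: w => [n|n].
  rewrite -PoszM; change (gp (gp g n) k = gp g (n * k)).
  by rewrite gpowM.
change (gp (inv (gp g n.+1)) k = gz g (Negz n * k%:Z)%R).
by rewrite gpow_inv -gpowM NegzE mulNr -PoszM gzpowN.
Qed.

Lemma gzpow_natpow g a w : gz (gp g a) w = gz g (a%:Z * w)%R.
Proof.
case: w => [n|n].
  rewrite -PoszM; change (gp (gp g a) n = gp g (a * n)).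
  by rewrite gpowM.
change (inv (gp (gp g a) n.+1) = gz g (a%:Z * Negz n)%R).
by rewrite NegzE mulrN -PoszM gzpowN gpowM.
Qed.

Lemma gzpow_comm g w s : gp (gz g w) s = gz (gp g s) w.
Proof. by rewrite gzpow_nat gzpow_natpow mulrC. Qed.

Lemma gzpow1 w : gz one w = one.
Proof.
case: w => n; first exact: gpow1.
by change (inv (gp one n.+1) = one); rewrite gpow1 inv1.
Qed.

Lemma gpow_cyc g w k : cyclic_subgroup mul inv one g (gp (gz g w) k).
Proof. by rewrite gzpow_nat; exists (w * k%:Z)%R. Qed.

End Alg.

Local Open Scope ring_scope.

Section Metric.
Context (T : topologicalType) (d : T -> T -> Rdefinitions.R).
Hypothesis dm : is_metric d.
Hypothesis dc : metric_compatible d.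

Lemma m_dxx x : d x x = 0.
Proof. by have [_ H _ _] := dm; apply/H. Qed.

Lemma m_ball_open x e : open [set y | d x y < e].
Proof.
apply/dc => y Hy; exists (e - d x y); first by rewrite subr_gt0.
move=> z /= Hz; have [_ _ _ tri] := dm.
have := tri x y z; lra.
Qed.

Lemma m_ball_nbhs x e : 0 < e -> nbhs x [set y | d x y < e].
Proof. by move=> e0; apply: open_nbhs_nbhs; split; [apply: m_ball_open|rewrite /= m_dxx]. Qed.

Lemma m_nbhs_ball x V : nbhs x V -> exists2 e, 0 < e & [set y | d x y < e] `<=` V.
Proof.
rewrite nbhsE => -[B [oB Bx] BV].
have [e e0 sub] := (dc B).1 oB x Bx.
by exists e => // y /sub /BV.
Qed.

Lemma m_cvg_metricP (u : nat -> T) l : u @ \oo --> l <->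
  forall e, 0 < e -> exists N, forall n, (N <= n)%N -> d l (u n) < e.
Proof.
split.
  move=> H e e0; have := H _ (m_ball_nbhs l e e0).
  by case=> N _ HN; exists N => n /HN.
move=> H V /(@m_nbhs_ball l) [e e0 sub]; have [N HN] := H e e0.
by exists N => // n /= Nn; apply: sub; apply: HN.
Qed.

Lemma m_metric_unique (u : nat -> T) (a b : T) : u @ \oo --> a -> u @ \oo --> b -> a = b.
Proof.
move=> /m_cvg_metricP Ha /m_cvg_metricP Hb; apply: contrapT => ab.
have [pos H sym tri] := dm.
have dab : 0 < d a b.
  rewrite lt_def pos andbT; apply/eqP => /H; exact: ab.
have [N1 H1] := Ha (d a b / 2) (divr_gt0 dab (ltr0Sn _ 1)).
have [N2 H2] := Hb (d a b / 2) (divr_gt0 dab (ltr0Sn _ 1)).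
have h1 := H1 (maxn N1 N2) (leq_maxl _ _).
have h2 := H2 (maxn N1 N2) (leq_maxr _ _).
have := tri a (u (maxn N1 N2)) b; rewrite (sym (u _) b); lra.
Qed.

Lemma m_closure1 (x : T) : closure [set x] = [set x].
Proof.
apply/seteqP; split; last exact: subset_closure.
move=> y Hy; apply: contrapT => yx.
have [pos H sym tri] := dm.
have dyx : 0 < d y x.
  rewrite lt_def pos andbT; apply/eqP => /H; exact: yx.
have [z [/= -> /=]] := Hy _ (m_ball_nbhs y (d y x) dyx).
by rewrite ltxx.
Qed.

End Metric.


Section TopGroup.
Context (T : topologicalType) (mul : T -> T -> T) (inv : T -> T) (one : T).
Hypothesis assoc : forall x y z, mul x (mul y z) = mul (mul x y) z.
Hypothesis unit : forall x, mul one x = x /\ mul x one = x.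
Hypothesis invl : forall x, mul (inv x) x = one /\ mul x (inv x) = one.
Hypothesis mulc : continuous (fun p : T * T => mul p.1 p.2).
Hypothesis invc : continuous inv.
Local Notation gp := (gpow mul one).
Local Notation gz := (gzpow mul inv one).
Local Notation Cyc := (cyclic_subgroup mul inv one).

Lemma cont_gpow n : continuous (fun x => gp x n).
Proof.
elim: n => [|n IH]; first exact: cst_continuous.
move=> x.
change ((fun y => mul y (gp y n)) @ x --> mul x (gp x n)).
apply: (@continuous2_cvg _ _ _ _ _ _ (fun y => y) (fun y => gp y n) mul).
- exact: (@mulc (x, gp x n)).
- exact: cvg_id.
- exact: IH.
Qed.

Lemma cont_gzpow w : continuous (fun x => gz x w).
Proof.
case: w => n; first exact: cont_gpow.
move=> x; apply: (continuous_comp (f := fun x => gp x n.+1) (g := inv)).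
  exact: cont_gpow.
exact: invc.
Qed.

Lemma C_transfer (f g : T) (a b : T -> T) (S : set nat) :
  (forall y, Cyc g y -> Cyc f (b y)) -> (forall y, Cyc g y -> a (b y) = y) ->
  (forall x k, Cyc f x -> a (gp x k) = gp (a x) k) -> a one = one ->
  {within Cyc f, continuous a} -> setC_S mul one S f -> setC_S mul one S g.
Proof.
move=> bC ab ahom a1 ac [sn [Ssn cvgf]].
have Cgg : Cyc g g by exists 1%R => //; exact: (unit g).2.
have [w _ bgE] := bC g Cgg.
pose v n := gz (gp f (sn n)) w.
have Cv n : Cyc f (v n) by rewrite /v -gzpow_comm //; exact: gpow_cyc.
have vcvg : v @ \oo --> one.
  have := continuous_cvg eventually_filter (cont_gzpow w one) cvgf.
  by rewrite gzpow1.
have Cf1 : Cyc f one.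
  exists 0%R => //.
have vw : v @ \oo --> within (Cyc f) (nbhs one).
  move=> W /= HW; have H := vcvg _ HW.
  case: H => N _ HN; exists N => // n /HN /= Hn.
  exact: Hn (Cv n).
have acvg := cvg_comp v a vw ((subspace_continuousP _ _).1 ac one Cf1).
rewrite /= in acvg.
exists sn; split => //.
rewrite /from_subspace a1 in acvg.
suff -> : (fun n => gp g (sn n)) = a \o v by [].
apply/funext => n /=.
rewrite -[in LHS](ab g Cgg) /v -gzpow_comm // -bgE ahom //.
by rewrite bgE; exists w.
Qed.

Lemma cyc_pow f x k : Cyc f x -> Cyc f (gp x k).
Proof. by case=> w _ <-; exact: gpow_cyc. Qed.

Lemma hom_one f (phi : T -> T) :
  (forall x y, Cyc f x -> Cyc f y -> phi (mul x y) = mul (phi x) (phi y)) ->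
  phi one = one.
Proof.
move=> hom; have Cf1 : Cyc f one by exists 0%R.
have := hom one one Cf1 Cf1; rewrite (unit one).1 => H.
symmetry; apply: (@mul_cancel T mul inv one assoc unit invl (phi one)).
by rewrite (unit _).2.
Qed.

Lemma hom_pow f (phi : T -> T) :
  (forall x y, Cyc f x -> Cyc f y -> phi (mul x y) = mul (phi x) (phi y)) ->
  forall x k, Cyc f x -> phi (gp x k) = gp (phi x) k.
Proof.
move=> hom x k Cx; elim: k => [|k IH]; first exact: (hom_one f phi hom).
by rewrite !gpowS hom ?IH //; exact: cyc_pow.
Qed.

Lemma sim_C f g S : top_similar mul inv one f g ->
  setC_S mul one S f -> setC_S mul one S g.
Proof.
move=> [phi [psi [[phiC psiC psiphi phipsi] [hom phic psic]]]].
exact: (C_transfer f g phi psi S psiC phipsi (hom_pow f phi hom) (hom_one f phi hom) phic).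
Qed.

Lemma sim_C' f g S : top_similar mul inv one f g ->
  setC_S mul one S g -> setC_S mul one S f.
Proof.
move=> [phi [psi [[phiC psiC psiphi phipsi] [hom phic psic]]]].
have Cg1 : Cyc g one by exists 0%R.
have psi1 : psi one = one.
  have h1 := hom_one f phi hom.
  by rewrite -{1}h1 psiphi //; exists 0%R.
have psihom : forall y k, Cyc g y -> psi (gp y k) = gp (psi y) k.
  move=> y k Cy; rewrite -[in LHS](phipsi y Cy) -(hom_pow f phi hom) ?psiphi //.
  - exact: cyc_pow f (psi y) k (psiC y Cy).
  - exact: psiC.
exact: (C_transfer g f psi phi S phiC psiphi psihom psi1 psic).
Qed.

Lemma meagre_sub (A B : set T) : A `<=` B -> meagre B -> meagre A.
Proof. by move=> AB [F [HF BF]]; exists F; split => // x /AB /BF. Qed.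

Lemma dense_sup (A B : set T) : A `<=` B -> dense A -> dense B.
Proof.
move=> AB dA O O0 oO; have [x [Ox Ax]] := dA O O0 oO.
by exists x; split => //; apply: AB.
Qed.

Lemma nowhere_dense_compl (U : set T) : open U -> dense U -> nowhere_dense (~` U).
Proof.
move=> oU dU; rewrite /nowhere_dense -(closure_id _).1; last exact: open_closedC.
apply/seteqP; split => // x; rewrite /interior /= nbhsE => -[B [oB Bx] BU].
have [y [By Uy]] := dU B (ex_intro _ x Bx) oB.
exact: BU y By Uy.
Qed.

Variable (d : T -> T -> Rdefinitions.R).
Hypothesis dm : is_metric d.
Hypothesis dc : metric_compatible d.

Definition UU (S : set nat) (k : nat) : set T :=
  \bigcup_(s in S) ((fun x => gp x s) @^-1` [set y | d one y < k.+1%:R^-1]).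

Lemma UU_open S k : open (UU S k).
Proof.
apply: bigcup_open => s _.
apply: (continuousP _).1; first exact: cont_gpow.
exact: (@m_ball_open _ _ dm dc one _).
Qed.

Lemma C_eq S : setC_S mul one S = \bigcap_k UU S k.
Proof.
apply/seteqP; split.
  move=> g [sn [Ssn /(@m_cvg_metricP _ _ dm dc _ _) H]] k _.
  have kpos : 0 < (k.+1%:R : Rdefinitions.R)^-1 by rewrite invr_gt0 ltr0Sn.
  have [N HN] := H _ kpos.
  by exists (sn N) => //; apply: HN.
move=> g Hg.
have /choice [sq Hsq] : forall k, exists s, S s /\ d one (gp g s) < k.+1%:R^-1.
  by move=> k; have [s Ss Hs] := Hg k I; exists s.
exists sq; split; first by move=> n; case: (Hsq n).
apply/(@m_cvg_metricP _ _ dm dc _ _) => e e0.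
have [N _ HN] := near_infty_natSinv_lt (PosNum e0).
exists N => n Nn; apply: lt_trans (Hsq n).2 _; exact: HN.
Qed.

Lemma C_dense S : dense (setA_S mul one S) -> dense (setC_S mul one S).
Proof.
apply: dense_sup => g [s Ss gs]; exists (fun=> s); split => //.
rewrite gs; exact: cvg_cst.
Qed.

Lemma C_meagre S : dense (setC_S mul one S) -> meagre (~` setC_S mul one S).
Proof.
move=> dC; exists (fun k => ~` UU S k); split.
  move=> k; apply: nowhere_dense_compl; first exact: UU_open.
  by apply: dense_sup dC; rewrite C_eq => x Hx; apply: Hx.
rewrite C_eq => x /= Hx; apply: contrapT => Hn; apply: Hx => k _.
by apply: contrapT => Hk; apply: Hn; exists k.
Qed.

End TopGroup.

Local Close Scope ring_scope.

Theorem mainTheorem13 (T : topologicalType)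
    (mul : T -> T -> T) (inv : T -> T) (one : T) :
  is_polish_group mul inv one ->
  (exists g : T, g <> one) ->
  (forall S : set nat, infinite_set S -> dense (setA_S mul one S)) ->
  (forall f : T, meagre [set g | top_similar mul inv one f g]) /\
  (forall S : set nat, infinite_set S ->
     [/\ dense (setC_S mul one S),
         Gdelta (setC_S mul one S) &
         forall g h : T, top_similar mul inv one g h ->
           setC_S mul one S g -> setC_S mul one S h]).
Proof.
move=> [[_ [d [dm dc _]]] [assoc unit invl mulc invc]] [g0 g0ne] HA.
have Cd : forall S, infinite_set S -> dense (setC_S mul one S).
  by move=> S iS; apply: C_dense; apply: HA.
split; last first.
  move=> S iS; split.
  - exact: Cd.
  - by exists (UU T mul one d S); [exact: UU_open _ _ _ mulc _ dm dc S | exact: C_eq _ _ _ _ dm dc S].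
  - by move=> g h gh; exact: sim_C _ _ _ _ assoc unit invl mulc invc g h S gh.
move=> f.
case: (pselect (f = one)) => [->|fne].
  apply: (meagre_sub _ _ [set one]).
    move=> g [phi [psi [[phiC psiC psiphi phipsi] _]]].
    have C1 y : cyclic_subgroup mul inv one one y -> y = one.
      by case=> w _ <-; rewrite (gzpow1 _ _ _ _ assoc unit invl).
    have Cgg : cyclic_subgroup mul inv one g g by exists 1%R => //; exact: (unit g).2.
    have Cg1 : cyclic_subgroup mul inv one g one by exists 0%R.
    rewrite /= -(phipsi g Cgg) (C1 _ (psiC g Cgg)).
    by rewrite -{2}(phipsi one Cg1) (C1 _ (psiC one Cg1)).
  exists (fun=> [set one]); split; last by move=> x ->; exists 0%N.
  move=> _; rewrite /nowhere_dense (m_closure1 _ _ dm dc).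
  apply/seteqP; split => // x Hx.
  have x1 : x = one := nbhs_singleton Hx.
  rewrite x1 in Hx.
  have lc : (fun y => mul (inv g0) y) @ g0 --> one.
    have := @continuous2_cvg _ _ _ _ _ _ (fun=> inv g0) (fun y => y) mul
      (inv g0) g0 (@mulc (inv g0, g0)) (cvg_cst _) cvg_id.
    by move=> /(_ _ _) H; rewrite -(invl g0).1; apply: H.
  have Hg0 : nbhs g0 [set g0].
    have H : nbhs g0 ((fun y => mul (inv g0) y) @^-1` [set one]) := lc _ Hx.
    apply: (@filterS _ (nbhs g0) _ _ _ _ H) => y /= Hy.
    by rewrite -[y](unit y).1 -(invl g0).2 -assoc Hy (unit _).2.
  pose S := [set n | gpow mul one g0 n <> one].
  have iS : infinite_set S.
    apply: unbounded_infinite => N.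
    case: (pselect (gpow mul one g0 N.+1 = one)) => h1; last first.
      by exists N.+1; split => //; exact: leqnSn.
    exists N.+2; split; first by do 2 apply: leqW.
    move=> h2; apply: g0ne.
    have : gpow mul one g0 N.+2 = mul g0 (gpow mul one g0 N.+1) by [].
    by rewrite h1 h2 (unit _).2 => ->.
  have [y [iy [s Ss ys]]] := HA S iS (interior [set g0]) (ex_intro _ g0 Hg0)
    (@open_interior _ _).
  have yg : y = g0 := nbhs_singleton iy.
  by apply: Ss; rewrite -yg.
have [S [iS nCf]] : exists S, infinite_set S /\ ~ setC_S mul one S f.
  apply: contrapT => H.
  have allC : forall S, infinite_set S -> setC_S mul one S f.
    by move=> S iS; apply: contrapT => nC; apply: H; exists S.
  have fcvg : (fun n => gpow mul one f n) @ \oo --> one.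
    apply/(m_cvg_metricP _ _ dm dc) => e e0; apply: contrapT => nN.
    pose S := [set n | ~ (d one (gpow mul one f n) < e)%R].
    have iS : infinite_set S.
      apply: unbounded_infinite => N; apply: contrapT => hN; apply: nN.
      exists N => n Nn; apply: contrapT => hn; apply: hN; by exists n; split.
    have [sn [Ssn /(m_cvg_metricP _ _ dm dc) Hs]] := allC S iS.
    have [N HN] := Hs e e0.
    exact: Ssn N (HN N (leqnn N)).
  have c1 : (fun n => gpow mul one f n.+1) @ \oo --> one.
    apply/(m_cvg_metricP _ _ dm dc) => e e0.
    have [N HN] := (m_cvg_metricP _ _ dm dc _ _).1 fcvg e e0.
    by exists N => n Nn; apply: HN; apply: leqW.
  have c2 : (fun n => gpow mul one f n.+1) @ \oo --> f.
    have := @continuous2_cvg _ _ _ _ _ _ (fun=> f) (fun n => gpow mul one f n) mul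
      f one (@mulc (f, one)) (cvg_cst _) fcvg.
    by move=> /(_ _ _) H2; rewrite -[X in _ --> X](unit f).2; apply: H2.
  by apply: fne; exact: (m_metric_unique _ _ dm dc _ _ _ c2 c1).
apply: (meagre_sub _ _ (~` setC_S mul one S)); last first.
  exact: (C_meagre _ _ _ mulc _ dm dc S (Cd S iS)).
move=> h Kh Ch; apply: nCf.
exact: (sim_C' _ _ _ _ assoc unit invl mulc invc f h S Kh Ch).
Qed.
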